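(* Let $r,m\ge0$ and $k\ge1$ be integers and $n\ge0$. Then $$\lim_{q\to1}\frac{\sum_{j=0}^{2n+1}(-1)^jq^{rj^2+mj}\begin{bmatrix} 2n+1\\ j\end{bmatrix}_{q^k}}{(q;q^2)_{n+1}}=\big((2n+1)r+m\big)(k-2r)^n.$$
   Context: $(x;q)_n=\prod_{j=0}^{n-1}(1-q^jx)$. The Gaussian binomial coefficient is $\begin{bmatrix} n\\ j\end{bmatrix}_q=\frac{(q;q)_n}{(q;q)_j(q;q)_{n-j}}$ for $0\le j\le n$, a polynomial in $q$; $\begin{bmatrix} n\\ j\end{bmatrix}_{q^k}$ is this with $q$ replaced by $q^k$. The quotient is a rational function of $q$ and the limit is taken as $q\to1$. *)

(* Defs.v *)
From Stdlib Require Import Reals.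
Open Scope R_scope.

Fixpoint qpoch (x q : R) (n : nat) : R :=
  match n with
  | O => 1
  | S n' => qpoch x q n' * (1 - q ^ n' * x)
  end.

Definition qbinom (q : R) (n j : nat) : R :=
  qpoch q q n / (qpoch q q j * qpoch q q (n - j)).

Definition thm_num (r m k n : nat) (q : R) : R :=
  sum_f_R0 (fun j => (-1) ^ j * q ^ (r * j * j + m * j) * qbinom (q ^ k) (2 * n + 1) j)
           (2 * n + 1).

Definition thm_quot (r m k n : nat) (q : R) : R :=
  thm_num r m k n q / qpoch q (q ^ 2) (n + 1).

(* Main.v *)
Require Import Defs.
From Stdlib Require Import Reals Lra Lia List.
From Coquelicot Require Import Coquelicot.
Open Scope R_scope.

Definition EP := list (R*R).
Fixpoint G (e:EP) (z:R) : R := match e with nil => 0 | (x,l)::e' => x * exp (l*z) + G e' z end.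
Fixpoint Gs (s:nat) (e:EP) (z:R) : R := match e with nil => 0 | (x,l)::e' => x * l^s * exp (l*z) + Gs s e' z end.
Fixpoint Mp (s:nat) (e:EP) : R := match e with nil => 0 | (x,l)::e' => x * l^s + Mp s e' end.
Definition negE (e:EP) : EP := map (fun p => (- fst p, snd p)) e.
Definition shiftE (c:R) (e:EP) : EP := map (fun p => (fst p, snd p + c)) e.

Lemma G_app e1 e2 z : G (e1++e2) z = G e1 z + G e2 z.
Proof. induction e1 as [|[x l] e IH]; simpl; [ring| rewrite IH; ring]. Qed.
Lemma G_neg e z : G (negE e) z = - G e z.
Proof. induction e as [|[x l] e IH]; [simpl; ring|].
 change (negE ((x,l)::e)) with ((-x,l)::negE e); cbn [G]; rewrite IH; ring. Qed.
Lemma G_shift c e z : G (shiftE c e) z = exp (c*z) * G e z.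
Proof. induction e as [|[x l] e IH]; [simpl; ring|].
 change (shiftE c ((x,l)::e)) with ((x,l+c)::shiftE c e); cbn [G]; rewrite IH.
 replace ((l+c)*z) with (l*z + c*z) by ring. rewrite exp_plus; ring. Qed.
Lemma Mp_app s e1 e2 : Mp s (e1++e2) = Mp s e1 + Mp s e2.
Proof. induction e1 as [|[x l] e IH]; simpl; [ring| rewrite IH; ring]. Qed.
Lemma Mp_neg s e : Mp s (negE e) = - Mp s e.
Proof. induction e as [|[x l] e IH]; [simpl; ring|].
 change (negE ((x,l)::e)) with ((-x,l)::negE e); cbn [Mp]; rewrite IH; ring. Qed.

Lemma Gs_deriv s e z : is_derive (Gs s e) z (Gs (S s) e z).
Proof.
induction e as [|[x l] e IH].
- simpl. apply is_derive_ext with (fun _ => 0). { intros; reflexivity. }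
  auto_derive; [exact I| ring].
- apply is_derive_ext with (fun t => x * l^s * exp (l*t) + Gs s e t).
  { intros; reflexivity. }
  simpl Gs. apply (is_derive_plus (fun t => x*l^s*exp(l*t)) (Gs s e)); [| exact IH].
  auto_derive; [exact I| ring].
Qed.

Lemma Derive_n_G s e z : Derive_n (G e) s z = Gs s e z.
Proof.
revert z; induction s as [|s IH]; intros z; simpl.
- induction e as [|[x l] e IH]; simpl; [ring| rewrite IH; ring].
- rewrite (Derive_ext _ _ _ IH). apply is_derive_unique, Gs_deriv.
Qed.

Lemma ex_derive_n_G k e t : ex_derive_n (G e) k t.
Proof.
destruct k as [|k]; simpl; [exact I|].
apply ex_derive_ext with (Gs k e). { intros; symmetry; apply Derive_n_G. }
eexists; apply Gs_deriv.
Qed.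

Lemma Gs0_Mp s e : Gs s e 0 = Mp s e.
Proof. induction e as [|[x l] e IH]; simpl; [ring|]. rewrite IH, Rmult_0_r, exp_0; ring. Qed.

Lemma transfer e e' s : (forall z, G e z = G e' z) -> Mp s e = Mp s e'.
Proof.
intros H. rewrite <- !Gs0_Mp, <- !Derive_n_G. apply Derive_n_ext. exact H.
Qed.
Lemma Mp_shift s c e : Mp s (shiftE c e) = sum_f_R0 (fun u => Binomial.C s u * c^u * Mp (s-u) e) s.
Proof.
induction e as [|[x l] e IH].
- simpl. symmetry. apply sum_eq_R0; intros; simpl; ring.
- change (shiftE c ((x,l)::e)) with ((x,l+c)::shiftE c e); cbn [Mp]; rewrite IH.
  rewrite Rplus_comm, (Rplus_comm l c), binomial, scal_sum, <- plus_sum. apply sum_eq; intros. ring.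
Qed.

Section SEsec.
Variables rr kk : R.

Fixpoint SE (N:nat) (x:R) : EP := match N with
 | O => (1,0)::nil
 | S N' => SE N' (x+kk) ++ negE (shiftE (rr+x) (SE N' (x+2*rr))) end.

Definition Sf N x z := G (SE N x) z.

Lemma Sf0 x z : Sf 0 x z = 1.
Proof. unfold Sf; simpl. rewrite Rmult_0_l, exp_0; ring. Qed.

Lemma Sf_rec N x z : Sf (S N) x z = Sf N (x+kk) z - exp((rr+x)*z) * Sf N (x+2*rr) z.
Proof. unfold Sf; simpl SE. rewrite G_app, G_neg, G_shift. ring. Qed.

Lemma expm a b z : exp (a*z) * exp (b*z) = exp ((a+b)*z).
Proof. rewrite <- exp_plus; f_equal; ring. Qed.

Lemma Sf_star N x z : Sf (S N) (x+kk) z - Sf (S N) x z =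
  exp((rr+x)*z) * (1 - exp(kk*INR (S N)*z)) * Sf N (x+2*rr) z.
Proof.
revert x; induction N as [|N IH]; intros x.
- rewrite !Sf_rec, !Sf0. simpl INR.
  replace (kk*1*z) with (kk*z) by ring. replace ((rr+(x+kk))*z) with ((rr+x)*z + kk*z) by ring.
  rewrite exp_plus. ring.
- rewrite (Sf_rec (S N) (x+kk)), (Sf_rec (S N) x), (Sf_rec N (x+2*rr)).
  pose proof (IH (x+kk)) as H1. pose proof (IH (x+2*rr)) as H2.
  replace (x+kk+2*rr) with (x+2*rr+kk) in * by ring.
  replace (Sf (S N) (x+kk+kk) z) with (Sf (S N) (x+kk) z + exp ((rr + (x + kk)) * z) * (1 - exp (kk * INR (S N) * z)) * Sf N (x + 2*rr + kk) z) by lra.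
  replace (Sf (S N) (x+2*rr+kk) z) with (Sf (S N) (x+2*rr) z + exp ((rr + (x + 2*rr)) * z) * (1 - exp (kk * INR (S N) * z)) * Sf N (x + 2*rr + 2*rr) z) by lra.
  rewrite (Sf_rec N (x+2*rr)).
  replace (exp ((rr + (x + kk)) * z)) with (exp ((rr+x)*z) * exp (kk*z)) by (rewrite expm; f_equal; ring).
  replace (exp (kk * INR (S (S N)) * z)) with (exp (kk * INR (S N) *z) * exp (kk*z)) by
    (rewrite expm; f_equal; rewrite (S_INR (S N)); ring).
  replace (exp ((rr + (x + 2*rr)) * z)) with (exp ((rr+x)*z) * exp (2*rr*z)) by (rewrite expm; f_equal; ring).
  replace (rr + (x+2*rr)) with (rr+x+2*rr) by ring.
  replace (exp ((rr+x+2*rr) * z)) with (exp ((rr+x)*z) * exp (2*rr*z)) by (rewrite expm; f_equal; ring).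
  ring.
Qed.

Lemma Sf_two N y z : Sf (S N) y z = Sf N y z - exp((rr+y+kk*INR N)*z) * Sf N (y+2*rr-kk) z.
Proof.
pose proof (Sf_star N (y-kk) z) as H. rewrite (Sf_rec N (y-kk)) in H.
replace (y-kk+kk) with y in H by ring. replace (y-kk+2*rr) with (y+2*rr-kk) in H by ring.
replace (exp ((rr+y+kk*INR N)*z)) with (exp ((rr+(y-kk))*z) * exp(kk*INR (S N)*z)) by
  (rewrite expm; f_equal; rewrite S_INR; ring).
lra.
Qed.

Lemma Sf_anti N x z : Sf N x z = (-1)^N * exp((rr*INR N^2 + x*INR N)*z) * Sf N (-2*rr*INR N - x) z.
Proof.
revert x; induction N as [|N IH]; intros x.
- rewrite !Sf0. simpl INR. replace ((rr*0^2+x*0)*z) with 0 by ring. rewrite exp_0; simpl; ring.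
- rewrite (Sf_rec N x), (IH (x+kk)), (IH (x+2*rr)), (Sf_two N).
  replace (-2*rr*INR (S N) - x + 2*rr - kk) with (-2*rr*INR N - (x+kk)) by (rewrite S_INR; ring).
  replace (-2*rr*INR (S N) - x) with (-2*rr*INR N - (x+2*rr)) by (rewrite S_INR; ring).
  set (y := -2*rr*INR N - (x+2*rr)).
  replace (exp ((rr * INR N ^ 2 + (x + kk) * INR N) * z)) with
    (exp ((rr * INR (S N) ^ 2 + x * INR (S N)) * z) * exp((rr + y + kk*INR N)*z))
    by (rewrite expm; f_equal; unfold y; rewrite S_INR; ring).
  replace (exp ((rr * INR (S N) ^ 2 + x * INR (S N)) * z)) with
    (exp ((rr+x)*z) * exp ((rr * INR N ^ 2 + (x + 2*rr) * INR N) * z))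
    by (rewrite expm; f_equal; rewrite S_INR; ring).
  simpl pow. ring.
Qed.
End SEsec.

Fixpoint DL (d:nat) (f:R->R) : Prop := match d with
 | O => forall x, f x = 0
 | S d' => forall a, DL d' (fun x => f (x+a) - f x) end.

Lemma DL_ext d f g : (forall x, f x = g x) -> DL d f -> DL d g.
Proof.
revert f g; induction d as [|d IH]; intros f g H Hf; simpl in *.
- intros x; rewrite <- H; auto.
- intros a. apply (IH (fun x => f (x+a) - f x)); [intros x; rewrite !H; reflexivity| apply Hf].
Qed.

Lemma DL_zero d : DL d (fun _ => 0).
Proof. induction d; simpl; auto. intros a. apply DL_ext with (fun _ => 0); auto. intros; ring. Qed.

Lemma DL_add d f g : DL d f -> DL d g -> DL d (fun x => f x + g x).
Proof.
revert f g; induction d as [|d IH]; intros f g Hf Hg; simpl in *.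
- intros x; rewrite Hf, Hg; ring.
- intros a. eapply DL_ext; [| apply (IH _ _ (Hf a) (Hg a))]. intros; simpl; ring.
Qed.

Lemma DL_scal d c f : DL d f -> DL d (fun x => c * f x).
Proof.
revert f; induction d as [|d IH]; intros f Hf; simpl in *.
- intros x; rewrite Hf; ring.
- intros a. eapply DL_ext; [| apply (IH _ (Hf a))]. intros; simpl; ring.
Qed.

Lemma DL_opp d f g : DL d f -> DL d g -> DL d (fun x => f x - g x).
Proof.
intros Hf Hg. eapply DL_ext; [| apply (DL_add _ _ _ Hf (DL_scal _ (-1) _ Hg))]. intros; simpl; ring.
Qed.

Lemma DL_shift d b f : DL d f -> DL d (fun x => f (x+b)).
Proof.
revert f; induction d as [|d IH]; intros f Hf; simpl in *.
- intros x; apply Hf.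
- intros a. eapply DL_ext; [| apply (IH _ (Hf a))]. intros; simpl.
  replace (x+a+b) with (x+b+a) by ring. reflexivity.
Qed.

Lemma DL_mono d f : DL d f -> DL (S d) f.
Proof.
revert f; induction d as [|d IH]; intros f Hf.
- simpl in *. intros a x. rewrite !Hf; ring.
- change (forall a, DL (S d) (fun x => f(x+a) - f x)). intros a. apply IH. exact (Hf a).
Qed.

Lemma DL_mono_le d d' f : (d <= d')%nat -> DL d f -> DL d' f.
Proof. intros H; induction H; auto. intros; apply DL_mono; auto. Qed.

Lemma DL_diff d a b f : DL d f -> DL (d-1) (fun x => f (x+a) - f (x+b)).
Proof.
destruct d as [|d]; simpl; intros Hf.
- intros x; rewrite !Hf; ring.
- rewrite Nat.sub_0_r. eapply DL_ext; [| apply (DL_opp _ _ _ (Hf a) (Hf b))]. intros; simpl; ring.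
Qed.

Lemma DL_const c : DL 1 (fun _ => c).
Proof. simpl; intros; ring. Qed.

Lemma DL_mul_aux n : forall a b f g, (a+b <= n)%nat -> DL (S a) f -> DL (S b) g ->
  DL (S (a+b)) (fun x => f x * g x).
Proof.
induction n as [|n IH]; intros a b f g Hab Hf Hg; simpl; intros h;
 (eapply DL_ext; [intros x; symmetry;
    replace (f (x+h) * g (x+h) - f x * g x) with
      (f (x+h) * (g (x+h) - g x) + (f (x+h) - f x) * g x) by ring; reflexivity|]);
 apply DL_add.
- assert (b = 0)%nat by lia. subst b. simpl in Hg.
  eapply DL_ext; [|apply DL_zero]. intros x; simpl. rewrite (Hg h x); ring.
- assert (a = 0)%nat by lia. subst a. simpl in Hf.
  eapply DL_ext; [|apply DL_zero]. intros x; simpl. rewrite (Hf h x); ring.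
- destruct b as [|b].
  + simpl in Hg. eapply DL_ext; [|apply DL_zero]. intros x; simpl. rewrite (Hg h x); ring.
  + replace (a + S b)%nat with (S (a+b)) by lia. apply IH; [lia| apply DL_shift; auto| exact (Hg h)].
- destruct a as [|a].
  + simpl in Hf. eapply DL_ext; [|apply DL_zero]. intros x; simpl. rewrite (Hf h x); ring.
  + apply (IH a b); [lia| exact (Hf h)| auto].
Qed.

Lemma DL_mul a b f g : DL (S a) f -> DL b g -> DL (a + b) (fun x => f x * g x).
Proof.
intros Hf Hg. destruct b as [|b].
- apply DL_mono_le with 0%nat; [lia|]. simpl in *; intros x; rewrite Hg; ring.
- replace (a + S b)%nat with (S (a+b)) by lia. apply (DL_mul_aux (a+b)); auto.
Qed.

Lemma DL_mul0 f g : DL 0 g -> DL 0 (fun x => f x * g x).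
Proof. simpl; intros H x; rewrite H; ring. Qed.

Lemma DL_pow c u : DL (S u) (fun x => (c + x)^u).
Proof.
induction u as [|u IH].
- simpl. intros; ring.
- apply DL_ext with (fun x => (c+x) * (c+x)^u). { intros; simpl; ring. }
  apply (DL_mul 1 (S u)); auto.
  simpl. intros a b x. ring.
Qed.

Lemma DL_sum d F s : (forall u, (u <= s)%nat -> DL d (F u)) -> DL d (fun x => sum_f_R0 (fun u => F u x) s).
Proof.
induction s as [|s IH]; intros H; simpl.
- apply H; lia.
- apply DL_add; [apply IH; intros; apply H; lia| apply H; lia].
Qed.

Lemma C_n0 n : Binomial.C n 0 = 1.
Proof. unfold Binomial.C. rewrite Nat.sub_0_r. change (Factorial.fact 0) with 1%nat.
 replace (INR 1) with 1 by reflexivity. field. apply INR_fact_neq_0. Qed.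

Lemma C_n1 n : Binomial.C (S n) 1 = INR (S n).
Proof. rewrite (pascal_step3 (S n) 0) by lia. rewrite C_n0, Nat.sub_0_r. simpl INR at 2. field. Qed.

Lemma binsum0 (mu : nat -> R) a t : (forall j, (j < t)%nat -> mu j = 0) ->
  sum_f_R0 (fun u => Binomial.C t u * a^u * mu (t-u)%nat) t = mu t.
Proof.
intros H. destruct t as [|t].
- simpl. rewrite C_n0. ring.
- rewrite decomp_sum by lia. simpl pred. rewrite C_n0, Nat.sub_0_r.
  rewrite sum_eq_R0; [ring|]. intros i Hi. rewrite H by lia. ring.
Qed.

Lemma binsum1 (mu : nat -> R) a t : (forall j, (j < t)%nat -> mu j = 0) ->
  sum_f_R0 (fun u => Binomial.C (S t) u * a^u * mu (S t-u)%nat) (S t) = mu (S t) + INR (S t) * a * mu t.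
Proof.
intros H. rewrite decomp_sum by lia. simpl pred. rewrite C_n0, Nat.sub_0_r.
destruct t as [|t].
- simpl. rewrite C_n1. simpl INR. ring.
- rewrite decomp_sum by lia. simpl pred. rewrite C_n1.
  rewrite sum_eq_R0; [simpl pow; replace (S (S t) - 1)%nat with (S t) by lia; ring|].
  intros i Hi. rewrite H by lia. ring.
Qed.

Lemma INR2 a : INR (2*a) = 2 * INR a.
Proof. rewrite mult_INR. simpl. ring. Qed.

Lemma negpow_odd n : (-1)^(S (2*n)) = -1.
Proof. induction n as [|n IH]; [simpl; ring|]. replace (S (2*S n)) with (S (S (S (2*n)))) by lia.
 rewrite <- tech_pow_Rmult, <- tech_pow_Rmult, IH. ring. Qed.

Section Val.
Variables r k : nat.
Hypothesis hk : (1 <= k)%nat.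

Definition cm N s x := Mp s (SE (INR r) (INR k) N x).

Lemma Mp_rec N s x : cm (S N) s x = cm N s (x + INR k) -
  sum_f_R0 (fun u => Binomial.C s u * (INR r + x)^u * cm N (s-u) (x + 2*INR r)) s.
Proof. unfold cm. simpl SE. rewrite Mp_app, Mp_neg, Mp_shift. reflexivity. Qed.

Lemma deg N : forall s, DL (2*s+1-N) (fun x => cm N s x).
Proof.
induction N as [|N IH]; intros s.
- apply DL_mono_le with 1%nat; [lia|]. unfold cm; simpl. intros a x. ring.
- eapply DL_ext; [intros x; symmetry; apply Mp_rec|].
  destruct s as [|s].
  + replace (2*0+1 - S N)%nat with ((2*0+1-N) - 1)%nat by lia.
    eapply DL_ext; [| apply (DL_diff _ (INR k) (2*INR r) _ (IH 0%nat))].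
    intros x; simpl sum_f_R0; rewrite C_n0; simpl; ring.
  + apply DL_ext with (fun x => (cm N (S s) (x + INR k) - cm N (S s) (x + 2 * INR r)) -
          sum_f_R0 (fun i => Binomial.C (S s) (S i) * ((INR r + x) ^ S i * cm N (s - i) (x + 2 * INR r))) s).
    { intros x. rewrite (decomp_sum _ (S s)) by lia. simpl pred. rewrite C_n0, Nat.sub_0_r.
      simpl pow. rewrite Rmult_1_r, Rmult_1_l. unfold Rminus. rewrite Ropp_plus_distr, Rplus_assoc.
      f_equal. f_equal. f_equal. apply sum_eq; intros; simpl; ring. }
    apply DL_opp.
    * replace (2 * S s + 1 - S N)%nat with ((2*S s+1-N) - 1)%nat by lia.
      apply DL_diff. apply IH.
    * apply DL_sum. intros i Hi. apply DL_scal.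
      assert (Hg := DL_shift _ (2*INR r) _ (IH (s-i)%nat)).
      destruct (Nat.eq_dec (2*(s-i)+1-N) 0) as [E|E].
      -- rewrite E in Hg. apply DL_mono_le with 0%nat; [lia|]. apply DL_mul0. exact Hg.
      -- apply DL_mono_le with (S i + (2*(s-i)+1-N))%nat; [lia|].
         apply DL_mul; [apply DL_pow| exact Hg].
Qed.

Lemma vanish N s x : (2*s < N)%nat -> cm N s x = 0.
Proof. intros H. pose proof (deg N s) as D. replace (2*s+1-N)%nat with 0%nat in D by lia. apply D. Qed.


Lemma star_m n x En : (forall y, cm (2*n) n y = En) ->
  cm (S (2*n)) (S n) (x + INR k) - cm (S (2*n)) (S n) x = - INR (S n) * (INR k * INR (S (2*n))) * En.
Proof.
intros He.
set (A := SE (INR r) (INR k) (2*n) (x + 2*INR r)).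
set (c := INR k * INR (S (2*n))).
assert (Ht := transfer (SE (INR r) (INR k) (S (2*n)) (x+INR k) ++ negE (SE (INR r) (INR k) (S (2*n)) x))
  (shiftE (INR r + x) (A ++ negE (shiftE c A))) (S n)).
assert (Hz : forall z, G (SE (INR r) (INR k) (S (2*n)) (x+INR k) ++ negE (SE (INR r) (INR k) (S (2*n)) x)) z =
   G (shiftE (INR r + x) (A ++ negE (shiftE c A))) z).
{ intros z. rewrite G_app, G_neg, G_shift, G_app, G_neg, G_shift.
  pose proof (Sf_star (INR r) (INR k) (2*n) x z) as H. unfold Sf in H. unfold A, c.
  transitivity (exp((INR r + x)*z) * (1 - exp(INR k * INR (S(2*n)) * z)) * G (SE (INR r) (INR k) (2 * n) (x + 2 * INR r)) z);
  [rewrite <- H; ring| ring]. }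
specialize (Ht Hz). clear Hz.
rewrite Mp_app, Mp_neg, Mp_shift in Ht.
assert (HA : forall j, (j < n)%nat -> Mp j A = 0).
{ intros j Hj. unfold A. apply (vanish (2*n) j). lia. }
assert (Hlow : forall j, (j < S n)%nat -> Mp j (A ++ negE (shiftE c A)) = 0).
{ intros j Hj. rewrite Mp_app, Mp_neg, Mp_shift.
  destruct (Nat.eq_dec j n) as [->|Hne].
  - pose proof (binsum0 (fun i => Mp i A) c n HA) as B. cbv beta in B. rewrite B. ring.
  - rewrite HA by lia. rewrite sum_eq_R0; [ring|]. intros w Hw. rewrite HA by lia. ring. }
pose proof (binsum0 (fun j => Mp j (A ++ negE (shiftE c A))) (INR r + x) (S n) Hlow) as B.
cbv beta in B. rewrite B in Ht. clear B.
rewrite Mp_app, Mp_neg, Mp_shift in Ht.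
pose proof (binsum1 (fun i => Mp i A) c n HA) as B. cbv beta in B. rewrite B in Ht.
assert (HeA : Mp n A = En) by apply He. unfold cm, Rminus. rewrite Ht, HeA. ring.
Qed.

Lemma anti_m n x : cm (S (2*n)) (S n) x = - cm (S (2*n)) (S n) (-2*INR r*INR (S (2*n)) - x).
Proof.
set (N := S (2*n)). set (y := -2*INR r*INR N - x).
assert (Ht := transfer (SE (INR r) (INR k) N x)
  (negE (shiftE (INR r * INR N ^ 2 + x * INR N) (SE (INR r) (INR k) N y))) (S n)).
assert (Hz : forall z, G (SE (INR r) (INR k) N x) z =
   G (negE (shiftE (INR r * INR N ^ 2 + x * INR N) (SE (INR r) (INR k) N y))) z).
{ intros z. rewrite G_neg, G_shift.
  pose proof (Sf_anti (INR r) (INR k) N x z) as H. unfold Sf in H. rewrite H.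
  unfold N. rewrite negpow_odd. fold N. unfold y. ring. }
specialize (Ht Hz). clear Hz.
rewrite Mp_neg, Mp_shift in Ht.
assert (Hlow : forall j, (j < S n)%nat -> Mp j (SE (INR r) (INR k) N y) = 0).
{ intros j Hj. apply (vanish N j). unfold N; lia. }
pose proof (binsum0 (fun j => Mp j (SE (INR r) (INR k) N y)) (INR r * INR N ^ 2 + x * INR N) (S n) Hlow) as B.
cbv beta in B. rewrite B in Ht. unfold cm. exact Ht.
Qed.

Lemma even_m n x g : (forall x a, cm (S (2*n)) (S n) (x + INR a) - cm (S (2*n)) (S n) x = g * INR a) ->
  cm (S (S (2*n))) (S n) x = g * (INR k - 2 * INR r).
Proof.
intros Hc. rewrite Mp_rec.
assert (Hlow : forall j, (j < n)%nat -> cm (S (2*n)) j (x + 2*INR r) = 0).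
{ intros j Hj. apply vanish. lia. }
pose proof (binsum1 (fun j => cm (S (2*n)) j (x + 2*INR r)) (INR r + x) n Hlow) as B.
cbv beta in B. rewrite B. rewrite (vanish (S (2*n)) n) by lia.
pose proof (Hc x k) as H1. pose proof (Hc x (2*r)%nat) as H2.
rewrite INR2 in H2. lra.
Qed.

Lemma odd_m n En : (forall y, cm (2*n) n y = En) ->
  (forall M, cm (S (2*n)) (S n) (INR M) = (-(INR n+1)*(2*INR n+1)*En) * (INR M + INR r * INR (S (2*n)))) /\
  (forall x a, cm (S (2*n)) (S n) (x + INR a) - cm (S (2*n)) (S n) x = (-(INR n+1)*(2*INR n+1)*En) * INR a).
Proof.
intros He.
set (c := cm (S (2*n)) (S n)).
pose proof (deg (S (2*n)) (S n)) as D. replace (2 * S n + 1 - S (2 * n))%nat with 2%nat in D by lia.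
assert (H2 : forall a x, c (x+a) - c x = c a - c 0).
{ intros a x. pose proof (D a x 0) as D'. cbv beta in D'.
  replace (0+x+a) with (x+a) in D' by ring. replace (0+x) with x in D' by ring.
  replace (0+a) with a in D' by ring. unfold c. lra. }
set (gg := c 1 - c 0).
assert (Hnat : forall x M, c (x + INR M) = c x + INR M * gg).
{ intros x M. induction M as [|M IH].
  - simpl. rewrite Rplus_0_r. ring.
  - rewrite S_INR. replace (x + (INR M + 1)) with ((x + INR M) + 1) by ring.
    pose proof (H2 1 (x + INR M)) as H. unfold gg in *. lra. }
assert (Hk : INR k <> 0). { apply not_0_INR. lia. }
assert (Hgg : gg = -(INR n+1)*(2*INR n+1)*En).
{ pose proof (star_m n 0 En He) as S1. fold c in S1. rewrite Rplus_0_l in S1.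
  pose proof (Hnat 0 k) as S2. rewrite Rplus_0_l in S2.
  rewrite S_INR, S_INR, INR2 in S1.
  apply (Rmult_eq_reg_l (INR k)); [|exact Hk]. lra. }
assert (H0 : c 0 = INR r * INR (S (2*n)) * gg).
{ pose proof (anti_m n 0) as A. fold c in A.
  pose proof (Hnat (-2 * INR r * INR (S (2 * n)) - 0) (2 * r * S (2*n))%nat) as A2.
  rewrite <- Nat.mul_assoc, INR2, mult_INR in A2.
  replace (-2 * INR r * INR (S (2 * n)) - 0 + 2 * (INR r * INR (S (2 * n)))) with 0 in A2 by ring.
  replace (2 * (INR r * INR (S (2 * n))) * gg) with (2 * (INR r * INR (S (2 * n)) * gg)) in A2 by ring.
  set (P := INR r * INR (S (2 * n)) * gg) in *. lra. }
split.
- intros M. pose proof (Hnat 0 M) as A. rewrite Rplus_0_l in A. fold c. rewrite A, H0, <- Hgg. ring.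
- intros x a. fold c. rewrite H2. pose proof (Hnat 0 a) as A. rewrite Rplus_0_l in A. rewrite A, <- Hgg. ring.
Qed.

Fixpoint Ev (n:nat) : R := match n with
 | O => 1
 | S n' => (INR k - 2*INR r) * (-(INR n'+1)*(2*INR n'+1)*Ev n') end.

Lemma main_ind n : (forall y, cm (2*n) n y = Ev n) /\
  (forall M, cm (S (2*n)) (S n) (INR M) = (-(INR n+1)*(2*INR n+1)*Ev n) * (INR M + INR r * INR (S (2*n)))) /\
  (forall x a, cm (S (2*n)) (S n) (x + INR a) - cm (S (2*n)) (S n) x = (-(INR n+1)*(2*INR n+1)*Ev n) * INR a).
Proof.
induction n as [|n IH].
- assert (He : forall y, cm (2*0) 0 y = Ev 0). { intros y. unfold cm. simpl. ring. }
  split; [exact He|]. apply odd_m; exact He.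
- destruct IH as [_ [_ IH3]].
  assert (He : forall y, cm (2*S n) (S n) y = Ev (S n)).
  { intros y. replace (2 * S n)%nat with (S (S (2*n))) by lia. rewrite (even_m n y _ IH3).
    simpl Ev. ring. }
  split; [exact He|]. apply odd_m; exact He.
Qed.

End Val.

Lemma pow_ne1 p a : 0 < p -> p <> 1 -> (1 <= a)%nat -> p^a <> 1.
Proof.
intros H0 H1 Ha. destruct (Rlt_or_le p 1) as [Hl|Hl].
- assert (0 <= p^a < 1) by (apply pow_lt_1_compat; [lra| lia]). lra.
- assert (1 < p) by lra. assert (1 < p^a) by (apply Rlt_pow_R1; [lra| lia]). lra.
Qed.

Lemma qp_S' x q n : qpoch x q (S n) = qpoch x q n * (1 - q^n * x).
Proof. reflexivity. Qed.

Section Link.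
Variables (p : R) (Hp0 : 0 < p) (Hp1 : p <> 1).

Lemma qp_S n : qpoch p p (S n) = qpoch p p n * (1 - p^(S n)).
Proof. simpl. ring. Qed.

Lemma qp_nz n : qpoch p p n <> 0.
Proof.
induction n as [|n IH]; [simpl; lra|]. rewrite qp_S. apply Rmult_integral_contrapositive; split; auto.
assert (p^(S n) <> 1) by (apply pow_ne1; auto; lia). lra.
Qed.

Definition qb' N j := if (j <=? N)%nat then qbinom p N j else 0.

Lemma qb_0 N : qbinom p N 0 = 1.
Proof. unfold qbinom. rewrite Nat.sub_0_r. simpl qpoch. field. apply qp_nz. Qed.

Lemma qb_N N : qbinom p N N = 1.
Proof. unfold qbinom. rewrite Nat.sub_diag. simpl qpoch. field. apply qp_nz. Qed.

Lemma pascal' N i : (i <= N)%nat -> qb' (S N) (S i) = qb' N i + p^(S i) * qb' N (S i).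
Proof.
intros Hi. unfold qb'.
destruct (Nat.eq_dec i N) as [->|Hne].
- rewrite (proj2 (Nat.leb_le (S N) (S N))) by lia. rewrite (proj2 (Nat.leb_le N N)) by lia.
  rewrite (proj2 (Nat.leb_nle (S N) N)) by lia. rewrite !qb_N. ring.
- rewrite (proj2 (Nat.leb_le (S i) (S N))) by lia. rewrite (proj2 (Nat.leb_le i N)) by lia.
  rewrite (proj2 (Nat.leb_le (S i) N)) by lia.
  unfold qbinom. set (a := (N - S i)%nat).
  replace (S N - S i)%nat with (S a) by (unfold a; lia).
  replace (N - i)%nat with (S a) by (unfold a; lia).
  rewrite !qp_S.
  assert (E : p^(S N) = p^(S i) * p^(S a)) by (rewrite <- pow_add; f_equal; unfold a; lia).
  rewrite E.
  assert (Hi1 : 1 - p^(S i) <> 0) by (assert (p^(S i) <> 1) by (apply pow_ne1; auto; lia); lra).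
  assert (Ha1 : 1 - p^(S a) <> 0) by (assert (p^(S a) <> 1) by (apply pow_ne1; auto; lia); lra).
  field. repeat split; auto; apply qp_nz.
Qed.

End Link.

Section Link2.
Variables (r k : nat) (hk : (1 <= k)%nat) (q : R) (Hq0 : 0 < q) (Hq1 : q <> 1).

Definition aq m j := (-1)^j * q^(r*j*j + m*j).
Definition Tq m N := sum_f_R0 (fun j => aq m j * qbinom (q^k) N j) N.

Lemma pk0 : 0 < q^k. Proof. apply pow_lt; auto. Qed.
Lemma pk1 : q^k <> 1. Proof. apply pow_ne1; auto. Qed.

Lemma Tq_ext m N M : (N <= M)%nat -> Tq m N = sum_f_R0 (fun j => aq m j * qb' (q^k) N j) M.
Proof.
intros H. induction H as [|M H IH].
- unfold Tq. apply sum_eq. intros j Hj. unfold qb'. rewrite (proj2 (Nat.leb_le j N)) by lia. reflexivity.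
- rewrite tech5, <- IH. unfold qb'. rewrite (proj2 (Nat.leb_nle (S M) N)) by lia. ring.
Qed.

Lemma Tq_rec m N : Tq m (S N) = Tq (m+k) N - q^(r+m) * Tq (m+2*r) N.
Proof.
rewrite (Tq_ext m (S N) (S N)) by lia. rewrite decomp_sum by lia. simpl pred.
rewrite (sum_eq _ (fun i => aq m (S i) * qb' (q^k) N i + aq m (S i) * (q^k)^(S i) * qb' (q^k) N (S i)))
  by (intros i Hi; rewrite (pascal' _ pk0 pk1) by lia; ring).
rewrite sum_plus.
assert (E1 : sum_f_R0 (fun i => aq m (S i) * qb' (q^k) N i) N = - q^(r+m) * Tq (m+2*r) N).
{ rewrite (Tq_ext (m+2*r) N N) by lia. rewrite scal_sum. apply sum_eq. intros i Hi.
  unfold aq. rewrite <- tech_pow_Rmult.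
  replace (r * S i * S i + m * S i)%nat with ((r+m) + (r*i*i + (m+2*r)*i))%nat by nia.
  rewrite pow_add. ring. }
assert (E2 : aq m 0 * qb' (q^k) (S N) 0 + sum_f_R0 (fun i => aq m (S i) * (q^k)^(S i) * qb' (q^k) N (S i)) N
   = Tq (m+k) N).
{ rewrite (Tq_ext (m+k) N (S N)) by lia. rewrite (decomp_sum _ (S N)) by lia. simpl pred.
  f_equal.
  - unfold qb'. simpl Nat.leb. rewrite !qb_0 by (apply pk0 || apply pk1). unfold aq. rewrite !Nat.mul_0_r. simpl. ring.
  - apply sum_eq. intros i Hi. unfold aq. rewrite <- pow_mult.
    replace (r * S i * S i + (m + k) * S i)%nat with ((r * S i * S i + m * S i) + k * S i)%nat by nia.
    rewrite (pow_add q (r * S i * S i + m * S i) (k * S i)). ring. }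
rewrite E1, <- E2. ring.
Qed.

Lemma Tq_Sf N : forall m, Tq m N = Sf (INR r) (INR k) N (INR m) (ln q).
Proof.
induction N as [|N IH]; intros m.
- rewrite Sf0. unfold Tq, aq. simpl. rewrite qb_0 by (apply pk0 || apply pk1). rewrite !Nat.mul_0_r. simpl. ring.
- rewrite Tq_rec, Sf_rec, !IH. rewrite plus_INR, plus_INR, INR2.
  replace (exp ((INR r + INR m) * ln q)) with (q^(r+m)); [ring|].
  rewrite <- plus_INR. rewrite <- Rpower_pow by auto. reflexivity.
Qed.

End Link2.

Lemma lim_ext f g D l x0 : limit1_in f D l x0 -> (forall x, D x -> f x = g x) -> limit1_in g D l x0.
Proof.
unfold limit1_in, limit_in. intros H E eps Heps. destruct (H eps Heps) as [a [Ha Hx]].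
exists a; split; auto. intros x [Dx Hd]. rewrite <- E; auto.
Qed.

Lemma num_right e n : (forall s, (s <= n)%nat -> Mp s e = 0) -> forall eps, 0 < eps ->
  exists del, 0 < del /\ forall y, 0 < y < del ->
  Rabs (G e y / y^(S n) - Mp (S n) e / INR (Factorial.fact (S n))) < eps.
Proof.
intros Hs eps Heps.
assert (cont : continuity_pt (Gs (S n) e) 0).
{ apply continuity_pt_filterlim. apply (@ex_derive_continuous R_AbsRing R_NormedModule (Gs (S n) e) 0). eexists; apply Gs_deriv. }
set (F := INR (Factorial.fact (S n))).
assert (HF : 0 < F) by (apply INR_fact_lt_0).
unfold continuity_pt, continue_in, limit1_in, limit_in in cont.
destruct (cont (eps*F)) as [alp [Halp Hc]]; [nra|].
exists alp; split; auto. intros y [Hy0 Hyd].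
destruct (Taylor_Lagrange (G e) n 0 y Hy0 (fun t _ k _ => ex_derive_n_G k e t)) as [z [[Hz0 Hzy] Ht]].
rewrite sum_eq_R0 in Ht.
2:{ intros s Hsn. rewrite Derive_n_G, Gs0_Mp, Hs by auto. ring. }
rewrite Derive_n_G in Ht. rewrite Rminus_0_r in Ht. fold F in Ht.
assert (Hz : Rabs (Gs (S n) e z - Gs (S n) e 0) < eps * F).
{ apply (Hc z). split. { split; [exact I| lra]. } simpl. unfold R_dist. rewrite Rminus_0_r, Rabs_pos_eq; lra. }
rewrite Gs0_Mp in Hz.
assert (Hyn : y^(S n) <> 0) by (apply pow_nonzero; lra).
replace (G e y / y ^ S n - Mp (S n) e / F) with ((Gs (S n) e z - Mp (S n) e) / F)
  by (rewrite Ht; field; split; lra).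
rewrite Rabs_div by lra. rewrite (Rabs_pos_eq F) by lra.
apply (Rmult_lt_reg_r F); auto. unfold Rdiv. rewrite Rmult_assoc, Rinv_l by lra. lra.
Qed.

Definition negX (e:EP) : EP := map (fun p => (fst p, - snd p)) e.
Lemma G_negX e y : G (negX e) y = G e (-y).
Proof. induction e as [|[x l] e IH]; [simpl; ring|].
 change (negX ((x,l)::e)) with ((x,-l)::negX e); cbn [G]; rewrite IH.
 replace (-l*y) with (l*-y) by ring. ring. Qed.
Lemma Mp_negX s e : Mp s (negX e) = (-1)^s * Mp s e.
Proof. induction e as [|[x l] e IH]; [simpl; ring|].
 change (negX ((x,l)::e)) with ((x,-l)::negX e); cbn [Mp]; rewrite IH.
 replace (-l) with (-1*l) by ring. rewrite Rpow_mult_distr. ring. Qed.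

Lemma num_lim e n : (forall s, (s <= n)%nat -> Mp s e = 0) ->
  limit1_in (fun y => G e y / y^(S n)) (fun y => y <> 0) (Mp (S n) e / INR (Factorial.fact (S n))) 0.
Proof.
intros Hs eps Heps.
destruct (num_right e n Hs eps Heps) as [d1 [Hd1 H1]].
assert (Hs' : forall s, (s <= n)%nat -> Mp s (negX e) = 0) by (intros; rewrite Mp_negX, Hs; auto; ring).
destruct (num_right (negX e) n Hs' eps Heps) as [d2 [Hd2 H2]].
exists (Rmin d1 d2); split; [apply Rmin_pos; auto|].
intros y [Hy Hd]. change (Rabs (y - 0) < Rmin d1 d2) in Hd. rewrite Rminus_0_r in Hd.
change (Rabs (G e y / y ^ S n - Mp (S n) e / INR (Factorial.fact (S n))) < eps).
destruct (Rlt_or_le 0 y) as [Hp|Hn].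
- apply H1. rewrite Rabs_pos_eq in Hd by lra. split; auto. apply Rlt_le_trans with (Rmin d1 d2); auto; apply Rmin_l.
- assert (Hyn : y < 0) by (destruct Hn; auto; subst; tauto).
  rewrite Rabs_left in Hd by lra.
  assert (Hy' : 0 < -y < d2) by (split; [lra| apply Rlt_le_trans with (Rmin d1 d2); auto; apply Rmin_r]).
  assert (HH := H2 (-y) Hy').
  rewrite G_negX, Mp_negX, Ropp_involutive in HH.
  replace (G e y / y ^ S n - Mp (S n) e / INR (Factorial.fact (S n))) with
    ((-1)^(S n) * (G e y / (- y) ^ S n - (-1) ^ S n * Mp (S n) e / INR (Factorial.fact (S n)))).
  + rewrite Rabs_mult, pow_1_abs. lra.
  + replace (-y) with (-1*y) by ring. rewrite Rpow_mult_distr.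
    assert (Hf : INR (Factorial.fact (S n)) <> 0) by apply INR_fact_neq_0.
    assert (Hyn' : y^(S n) <> 0) by (apply pow_nonzero; lra).
    assert (Hm : (-1)^(S n) * (-1)^(S n) = 1) by (rewrite <- Rpow_mult_distr; replace (-1*-1) with 1 by ring; apply pow1).
    assert (Hm0 : (-1)^(S n) <> 0) by (apply pow_nonzero; lra).
    field_simplify; auto. replace (((-1)^S n)^2) with 1 by (rewrite <- Hm; ring). field; auto.
Qed.

Definition Dfun n y := qpoch (exp y) (exp y ^ 2) (S n).
Fixpoint Dd n : R := match n with O => -1 | S n' => Dd n' * (-(2*INR (S n') + 1)) end.

Lemma exp_powINR y j : exp y ^ j = exp (INR j * y).
Proof. induction j as [|j IH]. - simpl. rewrite Rmult_0_l, exp_0; ring.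
 - rewrite S_INR, <- tech_pow_Rmult, IH. rewrite <- exp_plus. f_equal; ring. Qed.

Lemma Dfun_S n y : Dfun (S n) y = Dfun n y * (1 - exp((2*INR (S n) + 1) * y)).
Proof. unfold Dfun. rewrite (qp_S' _ _ (S n)). f_equal. f_equal.
 rewrite <- pow_mult, exp_powINR, <- exp_plus, INR2. f_equal; ring. Qed.

Lemma Dfun_0 y : Dfun 0 y = 1 - exp (1*y).
Proof. unfold Dfun. simpl. rewrite !Rmult_1_l. ring. Qed.

Lemma fac_lim c : limit1_in (fun y => (1 - exp(c*y))/y) (fun y => y <> 0) (-c) 0.
Proof.
assert (Hd : is_derive (fun t => exp (c*t)) 0 c).
{ auto_derive; [exact I|]. rewrite Rmult_0_r, exp_0. ring. }
apply is_derive_Reals in Hd.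
intros eps Heps. destruct (Hd eps Heps) as [d Hdd].
exists d; split; [apply cond_pos|]. intros y [Hy Hyd].
change (Rabs (y - 0) < d) in Hyd. rewrite Rminus_0_r in Hyd.
change (Rabs ((1 - exp (c*y))/y - - c) < eps).
specialize (Hdd y Hy Hyd). rewrite Rplus_0_l, Rmult_0_r, exp_0 in Hdd.
replace ((1 - exp (c * y)) / y - - c) with (- ((exp (c * y) - 1) / y - c)) by (field; auto).
rewrite Rabs_Ropp. exact Hdd.
Qed.

Lemma den_lim n : limit1_in (fun y => Dfun n y / y^(S n)) (fun y => y <> 0) (Dd n) 0.
Proof.
induction n as [|n IH].
- apply lim_ext with (fun y => (1 - exp(1*y))/y); [apply fac_lim|].
  intros y Hy. rewrite Dfun_0. simpl. field; auto.
- cbn [Dd]. apply lim_ext with (fun y => Dfun n y / y^(S n) * ((1 - exp((2*INR (S n) + 1)*y))/y)).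
  + apply limit_mul; [exact IH| apply fac_lim].
  + intros y Hy. rewrite Dfun_S. assert (y^(S n) <> 0) by (apply pow_nonzero; auto).
    change (y ^ S (S n)) with (y * y^(S n)). field; auto.
Qed.

Lemma Dd_nz n : Dd n <> 0.
Proof. induction n as [|n IH]; cbn [Dd]; [lra|]. apply Rmult_integral_contrapositive; split; auto.
 rewrite S_INR. pose proof (pos_INR n). lra. Qed.

Lemma Dfun_nz n y : y <> 0 -> Dfun n y <> 0.
Proof.
intros Hy. assert (F : forall c, 0 < c -> 1 - exp (c*y) <> 0).
{ intros c Hc H. assert (exp (c*y) = exp 0) by (rewrite exp_0; lra). apply exp_inv in H0.
  apply Rmult_integral in H0. lra. }
induction n as [|n IH].
- rewrite Dfun_0. apply F; lra.
- rewrite Dfun_S. apply Rmult_integral_contrapositive; split; auto. apply F.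
  rewrite S_INR. pose proof (pos_INR n). lra.
Qed.

Lemma F_lim e n : (forall s, (s <= n)%nat -> Mp s e = 0) ->
  limit1_in (fun y => G e y / Dfun n y) (fun y => y <> 0) ((Mp (S n) e / INR (Factorial.fact (S n))) / Dd n) 0.
Proof.
intros Hs. apply lim_ext with (fun y => G e y / y^(S n) * / (Dfun n y / y^(S n))).
- apply limit_mul; [apply num_lim; auto| apply limit_inv; [apply den_lim| apply Dd_nz]].
- intros y Hy. assert (y^(S n) <> 0) by (apply pow_nonzero; auto).
  pose proof (Dfun_nz n y Hy). field; auto.
Qed.

Lemma gam_val r k n : -(INR n+1)*(2*INR n+1)*Ev r k n = INR (Factorial.fact (S n)) * Dd n * (INR k - 2*INR r)^n.
Proof.
induction n as [|n IH].
- simpl. ring.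
- cbn [Ev]. cbn [Dd].
  replace (Factorial.fact (S (S n))) with (S (S n) * Factorial.fact (S n))%nat by reflexivity.
  rewrite mult_INR. rewrite <- tech_pow_Rmult.
  replace (-(INR (S n) + 1) * (2 * INR (S n) + 1) * ((INR k - 2 * INR r) * (-(INR n + 1) * (2 * INR n + 1) * Ev r k n)))
   with (-(INR (S n) + 1) * (2 * INR (S n) + 1) * (INR k - 2 * INR r) * (-(INR n + 1) * (2 * INR n + 1) * Ev r k n)) by ring.
  rewrite IH. rewrite (S_INR (S n)). ring.
Qed.

Theorem theorem2p4 (r m k n : nat) (hk : (1 <= k)%nat) :
  limit1_in (thm_quot r m k n) (fun q => q <> 1)
    (INR ((2 * n + 1) * r + m) * (INR k - 2 * INR r) ^ n) 1.
Proof.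
set (e := SE (INR r) (INR k) (S (2*n)) (INR m)).
assert (Hvan : forall s, (s <= n)%nat -> Mp s e = 0).
{ intros s Hs. change (cm r k (S (2*n)) s (INR m) = 0). apply vanish; lia. }
assert (Hval : Mp (S n) e = INR (Factorial.fact (S n)) * Dd n * (INR k - 2*INR r)^n * (INR m + INR r * INR (S (2*n)))).
{ destruct (main_ind r k hk n) as [_ [H2 _]]. change (cm r k (S (2*n)) (S n) (INR m) = INR (Factorial.fact (S n)) * Dd n * (INR k - 2*INR r)^n * (INR m + INR r * INR (S (2*n)))).
  rewrite H2, gam_val. reflexivity. }
assert (HL : Mp (S n) e / INR (Factorial.fact (S n)) / Dd n = INR ((2 * n + 1) * r + m) * (INR k - 2 * INR r) ^ n).
{ rewrite Hval. rewrite plus_INR, mult_INR, plus_INR, INR2, S_INR, INR2. simpl (INR 1).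
  pose proof (INR_fact_neq_0 (S n)). pose proof (Dd_nz n). field. auto. }
pose proof (F_lim e n Hvan) as HF.
intros eps Heps. destruct (HF eps Heps) as [d [Hd Hdd]].
exists (Rmin (1/2) (d/2)). split; [apply Rmin_pos; lra|].
intros q [Hq1 Hqd]. change (Rabs (q - 1) < Rmin (1/2) (d/2)) in Hqd.
assert (Hm1 := Rmin_l (1/2) (d/2)). assert (Hm2 := Rmin_r (1/2) (d/2)).
apply Rabs_def2 in Hqd. destruct Hqd as [Hqa Hqb].
assert (Hq0 : 0 < q) by lra.
set (y := ln q).
assert (Hy0 : y <> 0).
{ intros H. apply Hq1. rewrite <- (exp_ln q Hq0). fold y. rewrite H, exp_0. reflexivity. }
assert (Hyd : Rabs y < d).
{ assert (H1 : y <= q - 1) by (pose proof (exp_ineq1_le y) as E; unfold y in *; rewrite exp_ln in E; lra).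
  assert (H2 : - y <= / q - 1).
  { pose proof (exp_ineq1_le (- y)) as E. unfold y in *. rewrite exp_Ropp, exp_ln in E by auto. lra. }
  assert (H3 : / q - 1 < d).
  { replace (/q - 1) with ((1-q)/q) by (field; lra).
    apply (Rmult_lt_reg_r q); auto. unfold Rdiv. rewrite Rmult_assoc, Rinv_l by lra. nra. }
  apply Rabs_def1; lra. }
assert (Hnum : thm_num r m k n q = G e y).
{ unfold thm_num. change (Tq r k q m (2*n+1) = G e y).
  rewrite (Tq_Sf r k hk q Hq0 Hq1). unfold Sf, e, y. replace (2*n+1)%nat with (S (2*n)) by lia. reflexivity. }
assert (Hden : qpoch q (q^2) (n+1) = Dfun n y).
{ unfold Dfun, y. rewrite exp_ln by auto. rewrite Nat.add_1_r. reflexivity. }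
change (Rabs (thm_quot r m k n q - INR ((2 * n + 1) * r + m) * (INR k - 2 * INR r) ^ n) < eps).
unfold thm_quot. rewrite Hnum, Hden, <- HL.
apply (Hdd y). split; auto. change (Rabs (y - 0) < d). rewrite Rminus_0_r. exact Hyd.
Qed.
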